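(* Let $M\in\mathbb{R}^{m\times m}$ be symmetric with $k_{\underline m}I_m\le M\le k_{\overline m}I_m$ for constants $0<k_{\underline m}\le k_{\overline m}$ (with $k_{\underline m}<k_{\overline m}$ or equality allowed), let $C\in\mathbb{R}^{m\times m}$, $G\in\mathbb{R}^m$, $v\in\mathbb{R}^m$ satisfy $\|C\|\le k_c\|v\|$ and $\|G\|\le k_g$ for constants $k_c,k_g>0$. Set $\hat M=\frac{2}{k_{\underline m}^{-1}+k_{\overline m}^{-1}}I_m$, $\epsilon=\frac{k_{\underline m}^{-1}-k_{\overline m}^{-1}}{k_{\underline m}^{-1}+k_{\overline m}^{-1}}$, $f(v)=k_{\underline m}^{-1}(k_c\|v\|^2+k_g)$, $F=-M^{-1}(Cv+G)$. For arbitrary $\zeta,u_2\in\mathbb{R}^m$ and $\kappa\ge1$ define $$u_1=\begin{cases}-\frac{\kappa}{1-\epsilon}\frac{\zeta}{\|\zeta\|}\big(\epsilon\|u_2\|+f(v)\big),&\zeta\ne0,\\ 0,&\zeta=0,\end{cases}\qquad Z=u_1+(M^{-1}\hat M-I_m)(u_1+u_2)+F.$$ Then $\zeta^TZ\le0$.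
   Context: $\|\cdot\|$ denotes the Euclidean norm of vectors and the induced spectral norm of matrices. In the application, $M=M_i(q_i)$, $C=C_i(q_i,\dot q_i)$, $G=G_i(q_i)$, $v=\dot q_i$ are the inertia matrix, Coriolis/centrifugal matrix, gravity vector and velocity of an Euler–Lagrange system $M_i(q_i)\ddot q_i+C_i(q_i,\dot q_i)\dot q_i+G_i(q_i)=\tau_i$. *)

(* Defs.v *)
From HB Require Import structures.
From mathcomp Require Import all_boot all_order all_algebra.
From mathcomp Require Import boolp classical_sets reals.
Set Implicit Arguments. Unset Strict Implicit. Unset Printing Implicit Defensive.
Import Order.TTheory GRing.Theory Num.Theory.
Local Open Scope ring_scope.
Local Open Scope classical_set_scope.

Definition vnorm (R : realType) (n : nat) (x : 'cV[R]_n) : R :=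
  Num.sqrt (\sum_(i < n) x i ord0 ^+ 2).

Definition mnorm (R : realType) (p n : nat) (A : 'M[R]_(p, n)) : R :=
  sup [set vnorm (A *m x) | x in [set x : 'cV[R]_n | vnorm x <= 1]].

Definition qform (R : realType) (n : nat) (A : 'M[R]_n) (x : 'cV[R]_n) : R :=
  (x^T *m A *m x) ord0 ord0.

Definition loewner_le (R : realType) (n : nat) (A B : 'M[R]_n) : Prop :=
  forall x : 'cV[R]_n, qform A x <= qform B x.

(* Main.v *)
Require Import Defs.
From HB Require Import structures.
From mathcomp Require Import all_boot all_order all_algebra.
From mathcomp Require Import boolp classical_sets reals.
From mathcomp Require Import ring lra.
Import Order.TTheory GRing.Theory Num.Theory.
Local Open Scope ring_scope.
Set Implicit Arguments. Unset Strict Implicit. Unset Printing Implicit Defensive.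

Section Aux.
Variable R : realType.
Variable n : nat.
Implicit Types x y z : 'cV[R]_n.

Definition dot x y : R := \sum_(i < n) x i ord0 * y i ord0.

Lemma dotE x y : (x^T *m y) ord0 ord0 = dot x y.
Proof. rewrite !mxE; apply: eq_bigr => i _; by rewrite !mxE. Qed.

Lemma dotC x y : dot x y = dot y x.
Proof. by apply: eq_bigr => i _; rewrite mulrC. Qed.

Lemma dotDr x y z : dot x (y + z) = dot x y + dot x z.
Proof. rewrite /dot -big_split /=; apply: eq_bigr => i _; by rewrite mxE mulrDr. Qed.

Lemma dotZr a x y : dot x (a *: y) = a * dot x y.
Proof. rewrite /dot mulr_sumr; apply: eq_bigr => i _; rewrite mxE; ring. Qed.

Lemma dotNr x y : dot x (- y) = - dot x y.
Proof. by rewrite -scaleN1r dotZr mulN1r. Qed.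

Lemma dotDl x y z : dot (y + z) x = dot y x + dot z x.
Proof. by rewrite dotC dotDr !(dotC x). Qed.

Lemma dotZl a x y : dot (a *: y) x = a * dot y x.
Proof. by rewrite dotC dotZr dotC. Qed.

Lemma dot0r x : dot x 0 = 0.
Proof. by rewrite -(scale0r 0) dotZr mul0r. Qed.

Lemma dot0l x : dot 0 x = 0.
Proof. by rewrite dotC dot0r. Qed.

Lemma dot_ge0 x : 0 <= dot x x.
Proof. apply: sumr_ge0 => i _; exact: mul_ge0_le0 || by rewrite -expr2 sqr_ge0. Qed.

Lemma vnormE x : vnorm x = Num.sqrt (dot x x).
Proof. by rewrite /vnorm /dot; congr Num.sqrt; apply: eq_bigr => i _; rewrite expr2. Qed.

Lemma vnorm_ge0 x : 0 <= vnorm x.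
Proof. exact: sqrtr_ge0. Qed.

Lemma vnorm_sq x : vnorm x ^+ 2 = dot x x.
Proof. by rewrite vnormE sqr_sqrtr // dot_ge0. Qed.

Lemma quad_disc (a b c : R) : 0 <= a ->
  (forall t, 0 <= a * t ^+ 2 + 2 * b * t + c) -> b ^+ 2 <= a * c.
Proof.
move=> a0 H; case: (ltrP 0 a) => ha.
  have := H (- b / a).
  have -> : a * (- b / a) ^+ 2 + 2 * b * (- b / a) + c = c - b ^+ 2 / a.
    by field; rewrite gt_eqF.
  rewrite subr_ge0 ler_pdivrMr // => h. by rewrite mulrC.
have a0' : a = 0 by apply/eqP; rewrite eq_le ha a0.
subst a; rewrite mul0r; case: (eqVneq b 0) => [->|hb]; first by rewrite expr0n.
have := H (- (c + 1) / (2 * b)).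
have -> : 0 * (- (c + 1) / (2 * b)) ^+ 2 + 2 * b * (- (c + 1) / (2 * b)) + c = -1.
  by field.
move=> h; lra.
Qed.

Lemma form_sym (A : 'M[R]_n) x y : A^T = A -> dot x (A *m y) = dot (A *m x) y.
Proof.
move=> hA; rewrite -!dotE.
by rewrite trmx_mul hA mulmxA.
Qed.

Lemma form_CS (A : 'M[R]_n) x y : A^T = A -> (forall z, 0 <= dot z (A *m z)) ->
  dot x (A *m y) ^+ 2 <= dot x (A *m x) * dot y (A *m y).
Proof.
move=> hA hP; apply: quad_disc => // t.
have := hP (t *: x + y).
rewrite mulmxDr -scalemxAr dotDl !dotDr !dotZl !dotZr.
rewrite (dotC y (A *m x)) -form_sym // => h; lra.
Qed.

Lemma CS x y : dot x y ^+ 2 <= dot x x * dot y y.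
Proof.
have := @form_CS 1%:M x y (trmx1 _ _).
rewrite !mul1mx; apply=> z; by rewrite mul1mx dot_ge0.
Qed.

Lemma dot_le x y : dot x y <= vnorm x * vnorm y.
Proof.
have := CS x y; rewrite -!vnorm_sq -exprMn => h.
have h0 : 0 <= vnorm x * vnorm y by rewrite mulr_ge0 // vnorm_ge0.
apply: le_trans (ler_norm _) _.
by rewrite -(ger0_norm h0) -!sqrtr_sqr ler_sqrt // sqr_ge0.
Qed.

Lemma vnorm_le_sq x (b : R) : 0 <= b -> dot x x <= b ^+ 2 -> vnorm x <= b.
Proof. move=> b0 h; by rewrite vnormE -(ger0_norm b0) -sqrtr_sqr ler_sqrt ?sqr_ge0. Qed.

Lemma vnormD x y : vnorm (x + y) <= vnorm x + vnorm y.
Proof.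
apply: vnorm_le_sq; first by rewrite addr_ge0 // vnorm_ge0.
rewrite dotDl !dotDr (dotC y x) -!vnorm_sq; have := dot_le x y; lra.
Qed.

Lemma vnormN x : vnorm (- x) = vnorm x.
Proof. by rewrite !vnormE dotNr -(dotC x) dotNr opprK. Qed.

Lemma vnormZ a x : vnorm (a *: x) = `|a| * vnorm x.
Proof. by rewrite !vnormE dotZl dotZr mulrA -expr2 sqrtrM ?sqr_ge0 // sqrtr_sqr. Qed.

End Aux.


Section Aux2.
Local Open Scope classical_set_scope.
Variable R : realType.
Variable n : nat.
Implicit Types x y z : 'cV[R]_n.

Lemma coord_le x (j : 'I_n) : `|x j ord0| <= vnorm x.
Proof.
rewrite -sqrtr_sqr vnormE ler_sqrt ?dot_ge0 // /dot (bigD1 j) //= -expr2 lerDl.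
by apply: sumr_ge0 => i _; rewrite -expr2 sqr_ge0.
Qed.

Lemma vnorm0 : vnorm (0 : 'cV[R]_n) = 0.
Proof. by rewrite vnormE dot0r sqrtr0. Qed.

Definition Kb (C : 'M[R]_n) := Num.sqrt (\sum_(i < n) (\sum_(j < n) `|C i j|) ^+ 2).

Lemma Kb_ge0 C : 0 <= Kb C. Proof. exact: sqrtr_ge0. Qed.

Lemma mx_bound (C : 'M[R]_n) x : vnorm (C *m x) <= Kb C * vnorm x.
Proof.
apply: vnorm_le_sq; first by rewrite mulr_ge0 ?Kb_ge0 ?vnorm_ge0.
rewrite exprMn /Kb sqr_sqrtr; last by apply: sumr_ge0 => i _; rewrite sqr_ge0.
rewrite mulr_suml; apply: ler_sum => i _.
rewrite -exprMn -expr2.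
have hb : `|(C *m x) i ord0| <= (\sum_(j < n) `|C i j|) * vnorm x.
  rewrite mxE mulr_suml; apply: le_trans (ler_norm_sum _ _ _) _.
  apply: ler_sum => j _; rewrite normrM ler_wpM2l ?coord_le //.
rewrite -[X in X <= _]real_normK ?num_real //; apply: lerXn2r => //; rewrite ?nnegrE //.
by rewrite mulr_ge0 ?vnorm_ge0 // sumr_ge0.
Qed.

Lemma mnorm_bound (C : 'M[R]_n) x : vnorm (C *m x) <= mnorm C * vnorm x.
Proof.
set E := [set vnorm (C *m x) | x in [set x : 'cV[R]_n | vnorm x <= 1]].
have hs : has_sup E.
  split; first by exists (vnorm (C *m (0 : 'cV[R]_n))); exists (0 : 'cV[R]_n) => //=; rewrite vnorm0 ler01.
  exists (Kb C) => _ [y /= hy <-].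
  apply: le_trans (mx_bound C y) _; rewrite ler_piMr ?Kb_ge0 //.
have hub := sup_upper_bound hs.
have [h0|hpos] := eqVneq (vnorm x) 0.
  have := mx_bound C x; rewrite h0 mulr0 => h.
  by rewrite mulr0; apply: le_trans h _.
have hp : 0 < vnorm x by rewrite lt_def hpos vnorm_ge0.
have hE : E ((vnorm x)^-1 * vnorm (C *m x)).
  exists ((vnorm x)^-1 *: x) => /=.
    by rewrite vnormZ ger0_norm ?invr_ge0 ?vnorm_ge0 // mulVf.
  by rewrite -scalemxAr vnormZ ger0_norm ?invr_ge0 ?vnorm_ge0.
have h := hub _ hE.
have := ler_wpM2l (ltW hp) h; rewrite mulrA mulfV // mul1r mulrC => h2.
exact: h2.
Qed.

End Aux2.


Section Aux3.
Variable R : realType.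
Variable n : nat.
Implicit Types x y z : 'cV[R]_n.

Lemma dot_eq0 x : dot x x = 0 -> x = 0.
Proof.
move=> h; apply/matrixP => i j; rewrite (ord1 j) mxE.
have /psumr_eq0P H : \sum_(i < n) x i ord0 * x i ord0 = 0 by [].
have := H (fun k _ => ltac:(by rewrite -expr2 sqr_ge0)) i isT.
by move=> /eqP; rewrite -expr2 sqrf_eq0 => /eqP.
Qed.

Lemma vnorm_eq0 x : vnorm x = 0 -> x = 0.
Proof.
move=> /eqP; rewrite vnormE sqrtr_eq0 => h; apply: dot_eq0.
by apply/eqP; rewrite eq_le h dot_ge0.
Qed.

Lemma polar (B : 'cV[R]_n -> 'cV[R]_n -> R) (e : R) :
  (forall x y z a, B x (a *: y + z) = a * B x y + B x z) ->
  (forall x y, B x y = B y x) ->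
  (forall z, B z z <= e * dot z z) ->
  (forall z, - (e * dot z z) <= B z z) ->
  forall x y, B x y <= e * vnorm x * vnorm y.
Proof.
move=> lin sym hu hl.
have B0 x : B x 0 = 0.
  have := lin x 0 0 1; rewrite scaler0 addr0 mul1r => h.
  by apply: (addrI (B x 0)); rewrite addr0 -h.
have linD x y z : B x (y + z) = B x y + B x z by rewrite -{1}[y]scale1r lin mul1r.
have linZ x y a : B x (a *: y) = a * B x y by rewrite -[a *: y]addr0 lin B0 addr0.
have linN x y : B x (- y) = - B x y by rewrite -scaleN1r linZ mulN1r.
have key x y : 4 * B x y <= 2 * e * (dot x x + dot y y).
  have h1 := hu (x + y); have h2 := hl (x - y).
  move: h1 h2; rewrite !linD !linN !(sym (x + y)) !(sym (x - y)) !linD !linN.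
  rewrite !dotDl !dotDr -?(dotC y (- y)) -?(dotC x (- y)) ?dotNr ?dotDl ?dotDr ?dotNr (dotC (- y) y) dotNr (dotC y x) (sym y x).
  rewrite ?mulrDr ?mulrN ?mulrDr ?opprD.
  move=> h1 h2; lra.
move=> x y.
have [hx|hx] := eqVneq (vnorm x) 0.
  by rewrite hx (vnorm_eq0 hx) sym B0 mulr0 mul0r.
have [hy|hy] := eqVneq (vnorm y) 0.
  by rewrite hy (vnorm_eq0 hy) B0 mulr0.
have hx' : 0 < vnorm x by rewrite lt_def hx vnorm_ge0.
have hy' : 0 < vnorm y by rewrite lt_def hy vnorm_ge0.
have := key (vnorm y *: x) (vnorm x *: y).
rewrite linZ sym linZ sym !dotZl !dotZr -!vnorm_sq => h.
have hp : 0 < vnorm x * vnorm y by rewrite mulr_gt0.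
rewrite -(ler_pM2l hp); nra.
Qed.

End Aux3.


Section Aux4.
Variable R : realType.
Variable n : nat.
Implicit Types x y z : 'cV[R]_n.

Lemma qformE (A : 'M[R]_n) x : qform A x = dot x (A *m x).
Proof. by rewrite /qform -mulmxA dotE. Qed.

Lemma qform_scalar (a : R) x : qform (a%:M) x = a * dot x x.
Proof. by rewrite qformE mul_scalar_mx dotZr. Qed.

Lemma inv_bounds (M Ai : 'M[R]_n) (km kM : R) :
  0 < km -> km <= kM -> M^T = M -> M *m Ai = 1%:M ->
  (forall y, km * dot y y <= dot y (M *m y)) ->
  (forall y, dot y (M *m y) <= kM * dot y y) ->
  forall x, [/\ dot x x <= kM * dot x (Ai *m x),
               km * dot x (Ai *m x) <= dot x x &
               km ^+ 2 * dot (Ai *m x) (Ai *m x) <= dot x x].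
Proof.
move=> hkm hkM hMs hMA hlo hhi x.
set y := Ai *m x.
have hMy : M *m y = x by rewrite /y mulmxA hMA mul1mx.
set s := dot x x; set p := dot x y; set q := dot y y.
have hp : p = dot y (M *m y) by rewrite hMy dotC.
have pq : km * q <= p by rewrite hp; exact: hlo.
have q0 : 0 <= q := dot_ge0 y.
have s0 : 0 <= s := dot_ge0 x.
have p0 : 0 <= p by apply: le_trans pq; rewrite mulr_ge0 // ltW.
have cs1 : p ^+ 2 <= s * q := CS x y.
have hs : s = dot y (M *m x) by rewrite form_sym // hMy.
have psd : forall z, 0 <= dot z (M *m z).
  by move=> z; apply: le_trans (hlo z); rewrite mulr_ge0 ?dot_ge0 // ltW.
have cs2 := form_CS y x hMs psd.
rewrite -hs -hp in cs2.
have hx := hhi x; rewrite -/s in hx.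
have h1 : s ^+ 2 <= p * (kM * s) by apply: le_trans cs2 (ler_wpM2l p0 hx).
have h2 : s * (km * q) <= s * p := ler_wpM2l s0 pq.
have kq0 : 0 <= km * q by rewrite mulr_ge0 // ltW.
have h3 : (km * q) ^+ 2 <= p ^+ 2 by apply: lerXn2r; rewrite ?nnegrE.
split.
- have [->|sp] := eqVneq s 0; first by rewrite mulr_ge0 // ltW // (lt_le_trans hkm).
  have sp' : 0 < s by rewrite lt_def sp s0.
  nra.
- have [->|pp] := eqVneq p 0; first by rewrite mulr0.
  have pp' : 0 < p by rewrite lt_def pp p0.
  nra.
- have [->|qp] := eqVneq q 0; first by rewrite mulr0.
  have qp' : 0 < q by rewrite lt_def qp q0.
  nra.
Qed.


End Aux4.

Unset Implicit Arguments. Set Strict Implicit.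

Theorem lemma6 (R : realType) (m : nat)
    (M C : 'M[R]_m) (G v zeta u2 : 'cV[R]_m)
    (km kM kc kg kappa : R) :
  0 < km -> km <= kM -> 0 < kc -> 0 < kg -> 1 <= kappa ->
  M^T = M ->
  loewner_le (km%:M) M -> loewner_le M (kM%:M) ->
  mnorm C <= kc * vnorm v ->
  vnorm G <= kg ->
  let Mhat : 'M[R]_m := (2 / (km^-1 + kM^-1))%:M in
  let eps : R := (km^-1 - kM^-1) / (km^-1 + kM^-1) in
  let f : R := km^-1 * (kc * vnorm v ^+ 2 + kg) in
  let F : 'cV[R]_m := - (invmx M *m (C *m v + G)) in
  let u1 : 'cV[R]_m :=
    if zeta == 0 then 0
    else (- (kappa / (1 - eps) * (eps * vnorm u2 + f) / vnorm zeta)) *: zeta in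
  let Z : 'cV[R]_m := u1 + (invmx M *m Mhat - 1%:M) *m (u1 + u2) + F in
  (zeta^T *m Z) ord0 ord0 <= 0.
Proof.
move=> hkm hkMm hkc hkg hkap hMs hlo hhi hC hG; cbv zeta.
set Mhat := (2 / (km^-1 + kM^-1))%:M.
set eps := (km^-1 - kM^-1) / (km^-1 + kM^-1).
set f := km^-1 * (kc * vnorm v ^+ 2 + kg).
set F := - (invmx M *m (C *m v + G)).
set u1 := if zeta == 0 then _ else _.
set Z := u1 + _ + F.
have hlo' y : km * dot y y <= dot y (M *m y) by rewrite -qformE -qform_scalar; exact: hlo.
have hhi' y : dot y (M *m y) <= kM * dot y y by rewrite -qformE -qform_scalar; exact: hhi.
have hkM : 0 < kM by apply: lt_le_trans hkMm.
have Mu : M \in unitmx.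
  rewrite unitmxE unitfE; apply/negP => /det0P [w nw wM].
  have hMy : M *m w^T = 0 by rewrite -[M]hMs -trmx_mul wM trmx0.
  have := hlo' w^T; rewrite hMy dot0r => h.
  have hd : dot w^T w^T = 0.
    have := dot_ge0 w^T => h0; apply/eqP; rewrite eq_le; apply/andP; split; nra.
  move: nw; by rewrite -[w]trmxK (dot_eq0 hd) trmx0 eqxx.
set Ai := invmx M.
have hMA : M *m Ai = 1%:M := mulmxV Mu.
have AiT : Ai^T = Ai by rewrite /Ai trmx_inv hMs.
have IB := inv_bounds hkm hkMm hMs hMA hlo' hhi'.
set lm := km^-1; set lM := kM^-1.
have lm0 : 0 < lm by rewrite invr_gt0.
have lM0 : 0 < lM by rewrite invr_gt0.
have lMm : lM <= lm by rewrite lef_pV2 ?posrE.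
set mh := 2 / (lm + lM).
have lsum : lm + lM != 0 by rewrite gt_eqF // addr_gt0.
have e1 : mh * lM = 1 - eps by rewrite /mh /eps -/lm -/lM; field.
have e2 : mh * lm = 1 + eps by rewrite /mh /eps -/lm -/lM; field.
have eps0 : 0 <= eps by rewrite /eps divr_ge0 ?subr_ge0 // addr_ge0 // ltW.
have eps1 : 0 < 1 - eps by rewrite -e1 mulr_gt0 // divr_gt0 // addr_gt0.
have mh0 : 0 < mh by rewrite divr_gt0 // addr_gt0.
set w := C *m v + G.
have hZ : dot zeta Z = mh * dot zeta (Ai *m u1)
            + (mh * dot zeta (Ai *m u2) - dot zeta u2) - dot zeta (Ai *m w).
  rewrite /Z /F /Mhat mul_mx_scalar mulmxBl -scalemxAl mul1mx mulmxDr.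
  rewrite !dotDr !dotNr !dotZr !dotDr -/Ai -/w -/lm -/lM -/mh; ring.
rewrite dotE hZ.
have [hz|hz] := eqVneq zeta 0.
  by rewrite hz !dot0l; lra.
have T3 : - dot zeta (Ai *m w) <= vnorm zeta * f.
  rewrite -dotNr; apply: le_trans (dot_le _ _) _; rewrite vnormN.
  apply: ler_wpM2l; first exact: vnorm_ge0.
  have hAw : vnorm (Ai *m w) <= lm * vnorm w.
    apply: vnorm_le_sq; first by rewrite mulr_ge0 ?vnorm_ge0 // ltW.
    have [_ _ h] := IB w.
    rewrite exprMn vnorm_sq -(ler_pM2l (exprn_gt0 2 hkm)) mulrA -exprMn.
    by rewrite /lm mulfV ?gt_eqF // expr1n mul1r.
  apply: le_trans hAw _; rewrite /f -/lm; apply: ler_wpM2l; first exact: ltW.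
  apply: le_trans (vnormD _ _) _; apply: lerD => //.
  apply: le_trans (mnorm_bound _ _) _.
  by rewrite expr2 mulrA ler_wpM2r // vnorm_ge0.
have T2 : mh * dot zeta (Ai *m u2) - dot zeta u2 <= eps * vnorm zeta * vnorm u2.
  apply: (polar (B := fun x y => mh * dot x (Ai *m y) - dot x y)).
  - move=> x y z a /=; rewrite mulmxDr -scalemxAr !dotDr !dotZr; ring.
  - move=> x y /=; rewrite form_sym // (dotC (Ai *m x)) (dotC x y) //.
  - move=> z /=; have [_ h _] := IB z.
    have : dot z (Ai *m z) <= lm * dot z z.
      by rewrite -(ler_pM2l hkm) mulrA /lm mulfV ?gt_eqF // mul1r.
    move=> h'; have := ler_wpM2l (ltW mh0) h'; rewrite mulrA e2; lra.
  - move=> z /=; have [h _ _] := IB z.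
    have : lM * dot z z <= dot z (Ai *m z).
      by rewrite -(ler_pM2l hkM) mulrA /lM mulfV ?gt_eqF // mul1r.
    move=> h'; have := ler_wpM2l (ltW mh0) h'; rewrite mulrA e1; lra.
have nz0 : 0 < vnorm zeta.
  rewrite lt_def vnorm_ge0 andbT; apply/eqP => h; move: hz; by rewrite (vnorm_eq0 h) eqxx.
have hu1 : u1 = (- (kappa / (1 - eps) * (eps * vnorm u2 + f) / vnorm zeta)) *: zeta.
  by rewrite /u1 (negPf hz).
set c := kappa / (1 - eps) * (eps * vnorm u2 + f).
have f0 : 0 <= f.
  apply: mulr_ge0; first by rewrite invr_ge0 ltW.
  apply: addr_ge0; last exact: ltW.
  apply: mulr_ge0; [exact: ltW | exact: sqr_ge0].
have g0 : 0 <= eps * vnorm u2 + f by rewrite addr_ge0 // mulr_ge0 // vnorm_ge0.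
have c0 : 0 <= c by rewrite /c mulr_ge0 // divr_ge0 // ?ltW // (lt_le_trans ltr01).
have T1 : kappa * (eps * vnorm u2 + f) * vnorm zeta
          <= mh * (c / vnorm zeta) * dot zeta (Ai *m zeta).
  have [h _ _] := IB zeta.
  have hP : lM * vnorm zeta ^+ 2 <= dot zeta (Ai *m zeta).
    by rewrite vnorm_sq -(ler_pM2l hkM) mulrA /lM mulfV ?gt_eqF // mul1r.
  have hE : mh * (c / vnorm zeta) * (lM * vnorm zeta ^+ 2)
            = kappa * (eps * vnorm u2 + f) * vnorm zeta.
    have -> : mh * (c / vnorm zeta) * (lM * vnorm zeta ^+ 2) = (mh * lM) * c * vnorm zeta.
      by field; rewrite gt_eqF.
    rewrite e1 /c; field; by rewrite gt_eqF.
  rewrite -hE; apply: ler_wpM2l hP; apply: mulr_ge0 (ltW mh0) (divr_ge0 c0 (ltW nz0)).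
rewrite hu1 -scalemxAr dotZr.
have hk : 0 <= (kappa - 1) * ((eps * vnorm u2 + f) * vnorm zeta).
  by rewrite mulr_ge0 ?subr_ge0 // mulr_ge0 // ltW.
have -> : mh * (- (c / vnorm zeta) * dot zeta (Ai *m zeta))
   = - (mh * (c / vnorm zeta) * dot zeta (Ai *m zeta)) by ring.
rewrite -/c.
move: T1 T2 T3 hk; set X := mh * _ * _; set Y := mh * _ - _; set W := dot _ _.
move=> T1 T2 T3 hk; nra.
Qed.
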